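(* Let $d\ge2$ and $g=\sum_{\mathbf k\in\mathbb Z^d}g_{\mathbf k}u^{\mathbf k}\in R_d$. Then $g\in (f^{(d)})+\mathscr I_d^3$ if and only if all of the following hold: (A) $\sum_{\mathbf k}g_{\mathbf k}=0$; (B) $\sum_{\mathbf k}g_{\mathbf k}k_i=0$ for $i=1,\dots,d$; (C) $\sum_{\mathbf k}g_{\mathbf k}k_ik_j=0$ for $1\le i\ne j\le d$; (D) $\sum_{\mathbf k}g_{\mathbf k}(k_i^2-k_j^2)=0$ for $1\le i\ne j\le d$, where $\mathbf k=(k_1,\dots,k_d)$.
   Context: $R_d=\mathbb Z[u_1^{\pm1},\dots,u_d^{\pm1}]$, $u^{\mathbf k}=u_1^{k_1}\cdots u_d^{k_d}$. $f^{(d)}=2d-\sum_{i=1}^d(u_i+u_i^{-1})$, $(f^{(d)})=f^{(d)}R_d$. $\mathscr I_d=\{h\in R_d:h(1,\dots,1)=0\}$, and $\mathscr I_d^3$ is its third power. *)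

(* Defs.v *)
(* Laurent polynomials in d variables over Z are modelled as
   finite formal sums of terms c * u^k, i.e. lists of (coefficient, exponent)
   pairs; two lists represent the same element of R_d iff all their
   coefficients agree (lequiv). *)
From HB Require Import structures.
From mathcomp Require Import all_boot all_order all_algebra.
Set Implicit Arguments. Unset Strict Implicit. Unset Printing Implicit Defensive.
Import Order.TTheory GRing.Theory Num.Theory.
Local Open Scope ring_scope.

Definition mono (d : nat) := {ffun 'I_d -> int}.
Definition laurent (d : nat) := seq (int * mono d).

Definition lmul d (p q : laurent d) : laurent d :=
  [seq (a.1 * b.1, [ffun i => a.2 i + b.2 i] : mono d) | a : int * mono d <- p, b : int * mono d <- q].
Definition ladd d (p q : laurent d) : laurent d := p ++ q.

Definition coef d (p : laurent d) (k : mono d) : int :=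
  \sum_(t <- p | t.2 == k) t.1.
Definition lequiv d (p q : laurent d) : Prop := forall k, coef p k = coef q k.
(* exponents possibly occurring in p (a superset of the support) *)
Definition lsupp d (p : laurent d) : seq (mono d) := undup (map snd p).

Definition evec d (i : 'I_d) : mono d := [ffun j => ((i == j) : nat)%:Z].
Definition nvec d (i : 'I_d) : mono d := [ffun j => - ((i == j) : nat)%:Z].

Definition fd (d : nat) : laurent d :=
  (2 * (d%:Z), [ffun _ => 0]) ::
    ([seq (-1, evec i) | i <- enum 'I_d] ++ [seq (-1, nvec i) | i <- enum 'I_d]).

Definition eval1 d (p : laurent d) : int := \sum_(t <- p) t.1.
Definition inI d (p : laurent d) : Prop := eval1 p = 0.
Definition inI3 d (p : laurent d) : Prop :=
  exists s : seq (laurent d * laurent d * laurent d),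
    (forall x, x \in s -> [/\ inI x.1.1, inI x.1.2 & inI x.2]) /\
    lequiv p (flatten [seq lmul (lmul x.1.1 x.1.2) x.2 | x <- s]).
Definition in_fI3 d (g : laurent d) : Prop :=
  exists h r : laurent d, inI3 r /\ lequiv g (ladd (lmul (fd d) h) r).

(* Main.v *)
Require Import Defs.
From HB Require Import structures.
From mathcomp Require Import all_boot all_order all_algebra generic_quotient.
Import Order.TTheory GRing.Theory Num.Theory.
Local Open Scope ring_scope.
Set Implicit Arguments. Unset Strict Implicit. Unset Printing Implicit Defensive.

Section Lists.
Variable d : nat.
Local Notation L := (laurent d).
Local Notation M := (mono d).

Definition madd (k k' : M) : M := [ffun i => k i + k' i].
Definition msub (k k' : M) : M := [ffun i => k i - k' i].
Definition mz : M := [ffun _ => 0].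
Definition lneg (p : L) : L := [seq (- t.1, t.2) | t <- p].

Lemma coefE (p : L) k : coef p k = \sum_(t <- p) (if t.2 == k then t.1 else 0).
Proof. by rewrite /coef big_mkcond. Qed.

Lemma coef_cat (p q : L) k : coef (p ++ q) k = coef p k + coef q k.
Proof. by rewrite /coef big_cat. Qed.
Lemma coef_nil k : coef ([::] : L) k = 0. Proof. by rewrite /coef big_nil. Qed.
Lemma coef_neg p k : coef (lneg p) k = - coef p k.
Proof. by rewrite /coef big_map sumrN. Qed.

Lemma madd_eq (a b k : M) : (madd a b == k) = (b == msub k a).
Proof.
apply/eqP/eqP => H; apply/ffunP => i; move/ffunP: H => /(_ i); rewrite !ffunE.
  by move=> <-; rewrite addrC addKr.
by move=> ->; rewrite addrC subrK.
Qed.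

Lemma coef_lmul (p q : L) k :
  coef (lmul p q) k = \sum_(a <- p) a.1 * coef q (msub k a.2).
Proof.
rewrite coefE /lmul big_allpairs_dep /=; apply: eq_bigr => a _.
rewrite coefE big_distrr /=; apply: eq_bigr => b _.
have -> : ([ffun i => a.2 i + b.2 i] == k) = (b.2 == msub k a.2) by exact: madd_eq.
by case: ifP; rewrite ?mulr0.
Qed.

Lemma coef_lmul2 (p q : L) k :
  coef (lmul p q) k = \sum_(b <- q) b.1 * coef p (msub k b.2).
Proof.
rewrite coefE /lmul big_allpairs_dep /= exchange_big /=; apply: eq_bigr => b _.
rewrite coefE big_distrr /=; apply: eq_bigr => a _.
have -> : ([ffun i => a.2 i + b.2 i] == k) = (a.2 == msub k b.2).
  by rewrite -madd_eq; congr (_ == _); apply/ffunP => i; rewrite !ffunE addrC.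
by case: ifP; rewrite ?mulr0 // mulrC.
Qed.

Definition mom (phi : M -> int) (p : L) := \sum_(t <- p) t.1 * phi t.2.

Lemma mom_cat phi (p q : L) : mom phi (p ++ q) = mom phi p + mom phi q.
Proof. by rewrite /mom big_cat. Qed.
Lemma mom_neg phi (p : L) : mom phi (lneg p) = - mom phi p.
Proof. by rewrite /mom big_map -sumrN; apply: eq_bigr => t _; rewrite mulNr. Qed.
Lemma mom_lmul phi (p q : L) : mom phi (lmul p q) =
  \sum_(a <- p) \sum_(b <- q) a.1 * b.1 * phi (madd a.2 b.2).
Proof. by rewrite /mom /lmul big_allpairs_dep. Qed.

Lemma sum_pred1_seq (s : seq M) x (F : M -> int) : uniq s -> x \in s ->
  \sum_(k <- s) (if x == k then F k else 0) = F x.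
Proof.
move=> us xs; rewrite (bigD1_seq x) //= eqxx big1 ?addr0 // => k.
by rewrite eq_sym => /negbTE ->.
Qed.

Lemma mom_coefs phi (p : L) (s : seq M) : uniq s -> (forall t, t \in p -> t.2 \in s) ->
  mom phi p = \sum_(k <- s) coef p k * phi k.
Proof.
move=> us sub.
transitivity (\sum_(k <- s) \sum_(t <- p) (if t.2 == k then t.1 * phi t.2 else 0)).
  rewrite exchange_big /mom big_seq_cond [RHS]big_seq_cond; apply: eq_bigr => t /andP[tp _].
  by rewrite (@sum_pred1_seq s t.2 (fun=> t.1 * phi t.2)) //; apply: sub.
apply: eq_bigr => k _; rewrite coefE big_distrl /=; apply: eq_bigr => t _.
by case: ifP => [/eqP ->|]; rewrite ?mul0r.
Qed.

Lemma coef_out (p : L) k : k \notin lsupp p -> coef p k = 0.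
Proof.
move=> kn; rewrite /coef big1_seq // => t /andP[/eqP tk tp]; case/negP: kn.
by rewrite /lsupp mem_undup -tk; apply: map_f.
Qed.

Lemma mom_equiv phi (p q : L) : lequiv p q -> mom phi p = mom phi q.
Proof.
move=> e; rewrite (@mom_coefs phi p (lsupp (p ++ q))) ?undup_uniq //; last first.
  by move=> t tp; rewrite mem_undup map_cat mem_cat (map_f snd tp).
rewrite (@mom_coefs phi q (lsupp (p ++ q))) ?undup_uniq //; last first.
  by move=> t tp; rewrite mem_undup map_cat mem_cat (map_f snd tp) orbT.
by apply: eq_bigr => k _; rewrite e.
Qed.

Lemma mom_lsupp phi (p : L) : \sum_(k <- lsupp p) coef p k * phi k = mom phi p.
Proof.
by rewrite (@mom_coefs phi p (lsupp p)) ?undup_uniq // => t tp; rewrite mem_undup (map_f snd tp).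
Qed.

Definition lequivb (p q : L) := all (fun k => coef p k == coef q k) (lsupp (p ++ q)).

Lemma lequivP p q : reflect (lequiv p q) (lequivb p q).
Proof.
apply: (iffP allP) => [H k|H k _]; last by rewrite H.
case kin: (k \in lsupp (p ++ q)); first by apply/eqP; apply: H.
move/negbT: kin; rewrite /lsupp mem_undup map_cat mem_cat negb_or => /andP[k1 k2].
by rewrite !coef_out // /lsupp mem_undup.
Qed.


Lemma lequivb_refl : reflexive lequivb.
Proof. by move=> p; apply/lequivP. Qed.
Lemma lequivb_sym : symmetric lequivb.
Proof. by move=> p q; apply/lequivP/lequivP => H k; rewrite H. Qed.
Lemma lequivb_trans : transitive lequivb.
Proof. by move=> q p r /lequivP H1 /lequivP H2; apply/lequivP => k; rewrite H1 H2. Qed.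

Canonical lequiv_equiv := EquivRel lequivb lequivb_refl lequivb_sym lequivb_trans.
Local Open Scope quotient_scope.
Definition Lq := {eq_quot lequivb}.
HB.instance Definition _ : EqQuotient _ lequivb Lq := EqQuotient.on Lq.
HB.instance Definition _ := Choice.on Lq.

Local Open Scope quotient_scope.
Local Notation Pi := (\pi_Lq).

Lemma eqL (p q : L) : Pi p = Pi q <-> lequiv p q.
Proof. by split=> [/eqmodP /lequivP|/lequivP /eqmodP]. Qed.

Lemma reprL (p : L) k : coef (repr (Pi p)) k = coef p k.
Proof. by move: k; apply/eqL; rewrite reprK. Qed.

Definition ladd' (p q : L) : L := p ++ q.
Definition add := lift_op2 Lq ladd'.
Lemma pi_add : {morph Pi : x y / ladd' x y >-> add x y}.
Proof. by move=> x y; unlock add; apply/eqL => k; rewrite !coef_cat !reprL. Qed.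
Canonical pi_add_morph := PiMorph2 pi_add.

Definition opp := lift_op1 Lq lneg.
Lemma pi_opp : {morph Pi : x / lneg x >-> opp x}.
Proof. by move=> x; unlock opp; apply/eqL => k; rewrite !coef_neg !reprL. Qed.
Canonical pi_opp_morph := PiMorph1 pi_opp.

Definition lmul' (p q : L) : L := lmul p q.
Definition mul := lift_op2 Lq lmul'.
Lemma pi_mul : {morph Pi : x y / lmul' x y >-> mul x y}.
Proof.
move=> x y; unlock mul; apply/eqL => k; symmetry; rewrite /lmul'.
rewrite coef_lmul; under eq_bigr do rewrite reprL.
rewrite -coef_lmul coef_lmul2; under eq_bigr do rewrite reprL.
by rewrite -coef_lmul2.
Qed.
Canonical pi_mul_morph := PiMorph2 pi_mul.

Definition Lzero := lift_cst Lq ([::] : L).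
Canonical pi_zero_morph := PiConst Lzero.
Definition Lone := lift_cst Lq ([:: (1, mz)] : L).
Canonical pi_one_morph := PiConst Lone.

Lemma addA : associative add.
Proof.
by elim/quotW=> x; elim/quotW=> y; elim/quotW=> z; rewrite !piE /ladd' catA.
Qed.
Lemma addC : commutative add.
Proof.
elim/quotW=> x; elim/quotW=> y; rewrite !piE; apply/eqL => k.
by rewrite !coef_cat addrC.
Qed.
Lemma add0_l : left_id Lzero add.
Proof. by elim/quotW=> x; rewrite !piE. Qed.
Lemma addN_l : left_inverse Lzero opp add.
Proof.
elim/quotW=> x; rewrite !piE; apply/eqL => k.
by rewrite coef_cat coef_neg coef_nil addNr.
Qed.
HB.instance Definition _ := GRing.isZmodule.Build Lq addA addC add0_l addN_l.

Lemma msub_madd (k a b : M) : msub k (madd a b) = msub (msub k a) b.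
Proof. by apply/ffunP => i; rewrite !ffunE opprD addrA. Qed.

Lemma mulA : associative mul.
Proof.
elim/quotW=> x; elim/quotW=> y; elim/quotW=> z; rewrite !piE; apply/eqL => k.
rewrite /lmul' coef_lmul [in RHS]coef_lmul /lmul big_allpairs_dep /=.
apply: eq_bigr => a _; rewrite coef_lmul big_distrr /=; apply: eq_bigr => b _.
by rewrite mulrA -msub_madd.
Qed.
Lemma mulC : commutative mul.
Proof.
elim/quotW=> x; elim/quotW=> y; rewrite !piE; apply/eqL => k.
by rewrite /lmul' coef_lmul coef_lmul2.
Qed.
Lemma mul1_l : left_id Lone mul.
Proof.
elim/quotW=> x; rewrite !piE; apply/eqL => k.
rewrite /lmul' coef_lmul big_cons big_nil addr0 mul1r; congr coef.
by apply/ffunP => i; rewrite !ffunE subr0.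
Qed.
Lemma mul_addl : left_distributive mul add.
Proof.
elim/quotW=> x; elim/quotW=> y; elim/quotW=> z; rewrite !piE; apply/eqL => k.
by rewrite /lmul' /ladd' coef_cat !coef_lmul big_cat.
Qed.
Lemma nonzero1 : Lone != Lzero.
Proof.
rewrite !piE; apply/negP => /lequivP H; move: (H mz).
by rewrite coef_nil /coef big_cons big_nil eqxx addr0.
Qed.
HB.instance Definition _ :=
  GRing.Zmodule_isComNzRing.Build Lq mulA mulC mul1_l mul_addl nonzero1.

Lemma PiD (p q : L) : Pi (p ++ q) = Pi p + Pi q.
Proof. by rewrite -[p ++ q]/(ladd' p q) piE. Qed.
Lemma PiM (p q : L) : Pi (lmul p q) = Pi p * Pi q.
Proof. by rewrite -[lmul p q]/(lmul' p q) piE. Qed.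
Lemma PiN (p : L) : Pi (lneg p) = - Pi p.
Proof. by rewrite piE. Qed.
Lemma Pi0 : Pi [::] = 0.
Proof. by rewrite -[0]/Lzero piE. Qed.
Lemma Pi1 : Pi [:: (1, mz)] = 1.
Proof. by rewrite -[RHS]/Lone piE. Qed.


Definition mon (k : M) : Lq := Pi [:: (1, k)].

Lemma monD k k' : mon (madd k k') = mon k * mon k'.
Proof. by rewrite /mon -PiM /lmul /= mulr1. Qed.

Lemma mon0 : mon mz = 1.
Proof. exact: Pi1. Qed.

Lemma coef1 c k k' : coef ([:: (c, k)] : L) k' = if k == k' then c else 0.
Proof. by rewrite coefE big_cons big_nil addr0. Qed.

Lemma Pi1add a b k : Pi [:: (a + b, k)] = Pi [:: (a, k)] + Pi [:: (b, k)].
Proof.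
rewrite -PiD; apply/eqL => k'; rewrite coef_cat !coef1.
by case: ifP; rewrite ?addr0.
Qed.

Lemma Pi1zero k : Pi [:: (0, k)] = 0.
Proof. by rewrite -Pi0; apply/eqL => k'; rewrite coef1 coef_nil; case: ifP. Qed.

Lemma Pi_single c k : Pi [:: (c, k)] = mon k *~ c.
Proof.
have Hp (n : nat) : Pi [:: (n%:Z, k)] = mon k *~ n.
  elim: n => [|n IH]; first by rewrite Pi1zero.
  by rewrite -addn1 PoszD Pi1add IH mulrzDr.
case: c => n; first exact: Hp.
have : Pi [:: (Negz n, k)] + Pi [:: (n.+1%:Z, k)] = 0.
  by rewrite -Pi1add NegzE addNr Pi1zero.
by move/eqP; rewrite addr_eq0 => /eqP ->; rewrite Hp NegzE mulrNz.
Qed.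

Lemma Pi_cons t (p : L) : Pi (t :: p) = mon t.2 *~ t.1 + Pi p.
Proof. by rewrite -[t :: p]/([:: t] ++ p) PiD -Pi_single; case: t. Qed.

Lemma Pi_sum (p : L) : Pi p = \sum_(t <- p) mon t.2 *~ t.1.
Proof.
elim: p => [|t p IH]; first by rewrite big_nil Pi0.
by rewrite big_cons Pi_cons IH.
Qed.

Lemma Pi_flatten (ls : seq L) : Pi (flatten ls) = \sum_(l <- ls) Pi l.
Proof.
elim: ls => [|l ls IH]; first by rewrite big_nil Pi0.
by rewrite big_cons /= PiD IH.
Qed.

Lemma eval1_mom (p : L) : eval1 p = mom (fun=> 1) p.
Proof. by rewrite /eval1 /mom; apply: eq_bigr => t _; rewrite mulr1. Qed.

Definition ev := lift_fun1 Lq (@eval1 d).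
Lemma evPi p : ev (Pi p) = eval1 p.
Proof.
unlock ev; rewrite !eval1_mom; apply: mom_equiv => k; exact: reprL.
Qed.

Lemma eval1_lmul (p q : L) : eval1 (lmul p q) = eval1 p * eval1 q.
Proof.
rewrite /eval1 /lmul big_allpairs_dep big_distrl /=; apply: eq_bigr => a _.
by rewrite big_distrr.
Qed.

Lemma evM x y : ev (x * y) = ev x * ev y.
Proof.
by elim/quotW: x => p; elim/quotW: y => q; rewrite -PiM !evPi eval1_lmul.
Qed.

Definition inJ (z : Lq) := exists s : seq (Lq * Lq * Lq),
  (forall x, x \in s -> [&& ev x.1.1 == 0, ev x.1.2 == 0 & ev x.2 == 0]) /\
  z = \sum_(x <- s) x.1.1 * x.1.2 * x.2.

Lemma J0 : inJ 0.
Proof. by exists [::]; split => //; rewrite big_nil. Qed.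

Lemma JD z w : inJ z -> inJ w -> inJ (z + w).
Proof.
move=> [s [Hs ->]] [s' [Hs' ->]]; exists (s ++ s'); split; last by rewrite big_cat.
by move=> x; rewrite mem_cat => /orP[]; [apply: Hs|apply: Hs'].
Qed.

Lemma JM y z : inJ z -> inJ (y * z).
Proof.
move=> [s [Hs ->]]; exists [seq (y * x.1.1, x.1.2, x.2) | x <- s]; split.
  move=> x /mapP[x' /Hs /and3P[h1 h2 h3] ->] /=.
  by rewrite evM (eqP h1) mulr0 eqxx h2 h3.
by rewrite big_map big_distrr; apply: eq_bigr => x _; rewrite /= !mulrA.
Qed.

Lemma J3 a b c : ev a = 0 -> ev b = 0 -> ev c = 0 -> inJ (a * b * c).
Proof.
move=> ha hb hc; exists [:: (a, b, c)]; split; last by rewrite big_cons big_nil addr0.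
by move=> x; rewrite inE => /eqP -> /=; rewrite ha hb hc eqxx.
Qed.

Lemma JN z : inJ z -> inJ (- z).
Proof. by move=> h; rewrite -mulN1r; apply: JM. Qed.

Lemma JB z w : inJ z -> inJ w -> inJ (z - w).
Proof. by move=> h1 h2; apply: JD => //; apply: JN. Qed.

Lemma Jz z n : inJ z -> inJ (z *~ n).
Proof. by move=> h; rewrite -mulrzl; apply: JM. Qed.

Lemma Jsum (I : Type) (r : seq I) (P : pred I) (F : I -> Lq) :
  (forall i, P i -> inJ (F i)) -> inJ (\sum_(i <- r | P i) F i).
Proof.
move=> H; elim: r => [|i r IH]; first by rewrite big_nil; exact: J0.
by rewrite big_cons; case: ifP => // Pi'; apply: JD => //; apply: H.
Qed.


Definition U (l : 'I_d) := mon (evec l).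
Definition V (l : 'I_d) := mon (nvec l).
Definition X (l : 'I_d) := U l - 1.

Lemma UV l : V l * U l = 1.
Proof.
rewrite /U /V -monD -mon0; congr mon; apply/ffunP => i; rewrite !ffunE.
by rewrite addNr.
Qed.

Lemma XE l : X l = Pi [:: (1, evec l); (-1, mz)].
Proof. by rewrite Pi_cons Pi_single mon0 /= mulr1z mulrN1z /X /U. Qed.

Lemma evX l : ev (X l) = 0.
Proof. by rewrite XE evPi /eval1 !big_cons big_nil /= addr0 addrN. Qed.

Lemma linstep (Y : 'I_d -> Lq) k l :
  \sum_(i < d) Y i *~ (madd k (evec l)) i = \sum_(i < d) Y i *~ k i + Y l.
Proof.
under eq_bigr do rewrite ffunE mulrzDr.
rewrite big_split /=; congr (_ + _).
rewrite (bigD1 l) //= ffunE eqxx mulr1z big1 ?addr0 // => i.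
by rewrite ffunE eq_sym => /negbTE ->; rewrite mulr0z.
Qed.

Definition Lk k := \sum_(i < d) X i *~ k i.

End Lists.

Definition bin2z (z : int) : int :=
  match z with Posz n => ('C(n, 2))%:Z | Negz n => ('C(n.+2, 2))%:Z end.

Lemma bin2zS z : bin2z (z + 1) = bin2z z + z.
Proof.
case: z => [n|[|n]].
- by rewrite -PoszD addn1 /= binS bin1 PoszD.
- by rewrite /= binn.
- have -> : Negz n.+1 + 1 = Negz n by rewrite !NegzE -(addn1 n.+1) PoszD opprD subrK.
  rewrite /= [in RHS]binS bin1 PoszD NegzE -addrA.
  by rewrite (_ : (n.+2)%:Z = (n.+1)%:Z + 1) ?addrN ?addr0 // -addn1 PoszD.
Qed.


Lemma int_ind2 (P : int -> Prop) : P 0 -> (forall z, P z -> P (z + 1)) ->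
  (forall z, P (z + 1) -> P z) -> forall z, P z.
Proof.
move=> P0 Hu Hd; case=> n.
  by elim: n => // n IH; rewrite -addn1 PoszD; apply: Hu.
elim: n => [|n IH]; apply: Hd; first by [].
by rewrite (_ : Negz n.+1 + 1 = Negz n) // !NegzE -(addn1 n.+1) PoszD opprD subrK.
Qed.

Lemma sq_aux (z : int) : (z + 1) * (z + 1) - (z + 1) = z * z - z + z *+ 2.
Proof.
rewrite mulrDl mul1r addrK mulrDr mulr1 mulr2n addrA subrK //.
Qed.

Lemma bin2z2 z : bin2z z *+ 2 = z * z - z.
Proof.
elim/int_ind2: z => [//|z IH|z IH].
  by rewrite bin2zS mulrnDl IH sq_aux.
apply/(addIr (z *+ 2)); rewrite -mulrnDl -bin2zS IH sq_aux //.
Qed.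

Lemma Talg (R : comNzRingType) (m x L Q : R) :
  (x + 1) * m - (1 + (L + x) + (Q + x * L)) = (x + 1) * (m - (1 + L + Q)) + x * Q.
Proof.
have E : (x + 1) * (1 + L + Q) = 1 + (L + x) + (Q + x * L) + x * Q.
  rewrite mulrDl mul1r !mulrDr mulr1.
  by rewrite addrAC; congr (_ + _); rewrite addrC addrACA -[1 + L + x]addrA.
by rewrite mulrBr E [- (_ + x * Q)]opprD [in RHS]addrA subrK.
Qed.

Section Taylor.
Variable d : nat.
Local Notation Lq := (Lq d).
Local Notation M := (mono d).

Definition Q2 (k : M) : Lq := \sum_(i < d) (X i * X i) *~ bin2z (k i)
  + \sum_(i < d) \sum_(j < d | (j < i)%N) (X i * X j) *~ (k i * k j).

Lemma split3 (F : 'I_d -> Lq) l : \sum_(i < d) F i =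
  F l + \sum_(i < d) (if (i < l)%N then F i else 0) + \sum_(i < d) (if (l < i)%N then F i else 0).
Proof.
rewrite (bigD1 l) //= -addrA; congr (_ + _).
rewrite -big_split /= big_mkcond /=; apply: eq_bigr => i _.
case: (eqVneq i l) => [->|ne]; first by rewrite ltnn /= addr0.
rewrite /=; case: (ltngtP i l) => h; rewrite ?addr0 ?add0r //.
by case/eqP: ne; apply: ord_inj.
Qed.

Lemma maddE (k : M) l i : (madd k (evec l)) i = k i + (if l == i then 1 else 0).
Proof. by rewrite !ffunE; case: (l == i). Qed.

Lemma Q2step k l : Q2 (madd k (evec l)) = Q2 k + X l * Lk k.
Proof.
have Hdiag : \sum_(i < d) (X i * X i) *~ bin2z ((madd k (evec l)) i) =
    \sum_(i < d) (X i * X i) *~ bin2z (k i) + (X l * X l) *~ k l.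
  rewrite (bigD1 l) //= [in RHS](bigD1 l) //= maddE eqxx bin2zS mulrzDr.
  rewrite -!addrA; congr (_ + _); rewrite addrC; congr (_ + _).
  by apply: eq_bigr => i /negbTE; rewrite maddE eq_sym => ->; rewrite addr0.
have Hin (i : 'I_d) : \sum_(j < d | (j < i)%N) (X i * X j) *~ ((madd k (evec l)) i * (madd k (evec l)) j) =
   \sum_(j < d | (j < i)%N) (X i * X j) *~ (k i * k j)
   + (if l == i then \sum_(j < d | (j < i)%N) (X l * X j) *~ k j else 0)
   + (if (l < i)%N then X l * X i *~ k i else 0).
  transitivity (\sum_(j < d | (j < i)%N) ((X i * X j) *~ (k i * k j)
     + (if l == i then (X l * X j) *~ k j else 0)
     + (if l == j then X l * X i *~ k i else 0))).
    apply: eq_bigr => j; rewrite !maddE.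
    case: (eqVneq l i) => [<-|nli]; case: (eqVneq l j) => [<-|nlj] => ji.
    - by rewrite ltnn in ji.
    - by rewrite !addr0 (mulrDl (k l)) mul1r mulrzDr.
    - by rewrite !addr0 (mulrDr (k i)) mulr1 mulrzDr [X l * X i]mulrC.
    - by rewrite !addr0.
  rewrite !big_split /=; congr (_ + _ + _).
    by case: (l == i) => //=; rewrite big1.
  rewrite -big_mkcondr /=.
  case: (ltnP l i) => li.
    rewrite (big_pred1 l) // => j /=; case: (eqVneq j l) => [->|ne] /=; first by rewrite li.
    by rewrite andbF.
  rewrite big_pred0 // => j; apply/negP => /andP[ji /eqP lj]; subst j.
  by move: (leq_trans ji li); rewrite ltnn.
have Hoff : \sum_(i < d) \sum_(j < d | (j < i)%N) (X i * X j) *~ ((madd k (evec l)) i * (madd k (evec l)) j) =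
   \sum_(i < d) \sum_(j < d | (j < i)%N) (X i * X j) *~ (k i * k j)
   + \sum_(i < d) (if (i < l)%N then X l * X i *~ k i else 0)
   + \sum_(i < d) (if (l < i)%N then X l * X i *~ k i else 0).
  under eq_bigr do rewrite Hin.
  rewrite !big_split /=; congr (_ + _ + _).
  rewrite -big_mkcond (big_pred1 l) /=; last by move=> i; rewrite /= eq_sym.
  by rewrite big_mkcond.
have HL : X l * Lk k = X l * X l *~ k l
   + \sum_(i < d) (if (i < l)%N then X l * X i *~ k i else 0)
   + \sum_(i < d) (if (l < i)%N then X l * X i *~ k i else 0).
  rewrite /Lk big_distrr /=; under eq_bigr do rewrite mulrzAr.
  by rewrite (split3 _ l).
rewrite /Q2 Hdiag Hoff HL.
set D := \sum_(i < d) _; set O := \sum_(i < d) \sum_(j < d | _) _.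
set A := \sum_(i < d) (if (i < l)%N then _ else _).
set B := \sum_(i < d) (if (l < i)%N then _ else _).
by rewrite -!addrA; congr (_ + _); rewrite !addrA; congr (_ + _ + _); rewrite addrC.
Qed.


Definition Bk (k : M) : Lq := 1 + Lk k + Q2 k.
Definition Tk (k : M) : Lq := mon k - Bk k.

Lemma Lstep (k : M) (l : 'I_d) : Lk (madd k (evec l)) = Lk k + X l.
Proof. exact: linstep. Qed.

Lemma UE (l : 'I_d) : U l = X l + 1.
Proof. by rewrite /X subrK. Qed.

Lemma Tstep (k : M) (l : 'I_d) : Tk (madd k (evec l)) = U l * Tk k + X l * Q2 k.
Proof.
by rewrite /Tk /Bk monD Lstep Q2step -/(U l) mulrC UE Talg.
Qed.

Lemma XQ2J (k : M) (l : 'I_d) : inJ (X l * Q2 k).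
Proof.
rewrite /Q2 mulrDr !big_distrr /=; apply: JD; apply: Jsum => i _.
  by rewrite mulrzAr mulrA; apply: Jz; apply: J3; rewrite evX.
rewrite big_distrr /=; apply: Jsum => j _.
by rewrite mulrzAr mulrA; apply: Jz; apply: J3; rewrite evX.
Qed.

Lemma T0 : Tk (mz d) = 0.
Proof.
rewrite /Tk /Bk /Lk /Q2 mon0 !big1 ?addr0 ?subrr // => i.
- by move=> _; rewrite big1 // => j _; rewrite ffunE mul0r mulr0z.
- by move=> _; rewrite ffunE mulr0z.
- by move=> _; rewrite ffunE mulr0z.
Qed.


Definition nrm (k : M) : nat := \sum_(i < d) `|k i|%N.

Lemma nrm_upd (k k' : M) l : (forall i, i != l -> k' i = k i) ->
  (nrm k' + `|k l|)%N = (nrm k + `|k' l|)%N.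
Proof.
move=> H; rewrite /nrm (bigD1 l) //= [X in (_ = X + _)%N](bigD1 l) //=.
have -> : (\sum_(i < d | i != l) `|k' i|)%N = (\sum_(i < d | i != l) `|k i|)%N.
  by apply: eq_bigr => i /H ->.
by rewrite [LHS]addnAC [RHS]addnAC [(`|k' l| + _)%N]addnC.
Qed.

Lemma Tall k : inJ (Tk k).
Proof.
move: {2}(nrm k) (erefl (nrm k)) => n; elim: n k => [|n IH] k Hn.
  have -> : k = mz d.
    apply/ffunP => i; rewrite ffunE; apply/eqP; rewrite -absz_eq0.
    by move/eqP: Hn; rewrite /nrm sum_nat_eq0 => /forallP /(_ i).
  by rewrite T0; exact: J0.
have [l kl] : exists l, k l != 0.
  case: (pickP (fun l => k l != 0)) => [l kl|H]; first by exists l.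
  by move: Hn; rewrite /nrm big1 // => i _; move: (H i) => /negbFE/eqP ->.
case E: (k l) kl => [[|m]|m] // _.
- pose k'' := msub k (evec l).
  have Ek : k = madd k'' (evec l).
    by apply/ffunP => i; rewrite !ffunE subrK.
  have Hn'' : nrm k'' = n.
    have Hs : forall i, i != l -> k'' i = k i.
      by move=> i /negbTE il; rewrite /k'' !ffunE eq_sym il subr0.
    have := @nrm_upd k k'' l Hs.
    rewrite Hn E {1}/k'' ffunE E ffunE eqxx /= subn1 /= => H'.
    by apply/eqP; rewrite -(eqn_add2r m.+1) H' addSnnS.
  rewrite Ek Tstep; apply: JD; last exact: XQ2J.
  by apply: JM; apply: IH.
- pose k'' := madd k (evec l).
  have Hn'' : nrm k'' = n.
    have Hs : forall i, i != l -> k'' i = k i.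
      by move=> i /negbTE il; rewrite /k'' !ffunE eq_sym il addr0.
    have := @nrm_upd k k'' l Hs.
    rewrite Hn E {1}/k'' ffunE E ffunE eqxx /= NegzE.
    rewrite (_ : - (m.+1)%:Z + 1 = - m%:Z); last first.
      by rewrite -addn1 PoszD opprD subrK.
    rewrite abszN => H'.
    by apply/eqP; rewrite -(eqn_add2r m.+1) H' addSnnS.
  have H1 := Tstep k l.
  have -> : Tk k = V l * (Tk k'' - X l * Q2 k).
    by rewrite /k'' H1 addrK mulrA UV mul1r.
  apply: JM; apply: JB; last exact: XQ2J.
  exact: IH.
Qed.

End Taylor.

Local Open Scope quotient_scope.

Lemma alg4 (R : comNzRingType) (x y ai bi aj bj : R) :
  x * y * ((ai + bi) * (aj + bj)) =
  x * (ai * aj) * (y * 1) + x * ai * (y * bj) + x * aj * (y * bi) + x * 1 * (y * (bi * bj)).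
Proof.
rewrite !mulr1 mulrDl !mulrDr !mulrA addrA; congr (_ + _ + _ + _).
- by rewrite [RHS]mulrAC [x * ai * y]mulrAC.
- by rewrite [x * ai * y]mulrAC.
- by rewrite [x * aj * y]mulrAC [RHS]mulrAC.
Qed.

Lemma alg2 (R : comNzRingType) (x y ai bi : R) :
  x * y * (ai + bi) = x * ai * (y * 1) + x * 1 * (y * bi).
Proof. by rewrite !mulr1 mulrDr mulrA [x * y * ai]mulrAC. Qed.

Section Moments.
Variable d : nat.
Local Notation L := (laurent d).
Local Notation M := (mono d).

Definition m0 (p : L) := mom (fun=> 1) p.
Definition m1 (i : 'I_d) (p : L) := mom (fun k => k i) p.
Definition M2 (i j : 'I_d) (p : L) := mom (fun k => k i * k j) p.
Definition Cb (i : 'I_d) (p : L) := mom (fun k => bin2z (k i)) p.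

Lemma sum_if (l : 'I_d) (a : int) : \sum_(k < d) (if k == l then a else 0) = a.
Proof. by rewrite -big_mkcond big_pred1_eq. Qed.

Lemma evecE (k l : 'I_d) : evec k l = if k == l then 1 else 0.
Proof. by rewrite ffunE; case: (k == l). Qed.
Lemma nvecE (k l : 'I_d) : nvec k l = if k == l then -1 else 0.
Proof. by rewrite ffunE; case: (k == l). Qed.

Lemma mom_fd phi : mom phi (fd d) =
  2 * d%:Z * phi (mz d) - \sum_(i < d) phi (evec i) - \sum_(i < d) phi (nvec i).
Proof.
have E (v : 'I_d -> M) : \sum_(t <- [seq (-1, v i) | i <- enum 'I_d]) t.1 * phi t.2 =
    - \sum_(i < d) phi (v i).
  by rewrite big_map big_enum -sumrN; apply: eq_bigr => i _; rewrite /= mulN1r.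
by rewrite /mom /fd big_cons big_cat !E /= addrA.
Qed.

Lemma sum_const_int (c : int) : \sum_(i < d) c = c * d%:Z.
Proof. by rewrite sumr_const card_ord -mulr_natr natz. Qed.

Lemma m0_fd : m0 (fd d) = 0.
Proof.
rewrite /m0 mom_fd !sum_const_int mul1r mulr1.
by rewrite -mulr_natl mulr2n mulr1 mulrDl mul1r addrK subrr.
Qed.

Lemma m1_fd l : m1 l (fd d) = 0.
Proof.
rewrite /m1 mom_fd ffunE mulr0.
under eq_bigr do rewrite evecE.
under [X in _ - X]eq_bigr do rewrite nvecE.
by rewrite !sum_if sub0r opprK addNr.
Qed.

Lemma M2_fd i j : M2 i j (fd d) = if i == j then -2 else 0.
Proof.
rewrite /M2 mom_fd !ffunE mul0r mulr0 sub0r.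
under eq_bigr do rewrite !evecE.
under [X in _ - X]eq_bigr do rewrite !nvecE.
case: (eqVneq i j) => [E0|ne].
  subst j.
  have E (a : int) k : (if k == i then a else 0) * (if k == i then a else 0) =
     if k == i then a * a else 0 by case: (k == i); rewrite ?mulr0.
  under eq_bigr do rewrite E. under [X in _ - X]eq_bigr do rewrite E.
  by rewrite !sum_if mulr1 -opprD.
have E (a : int) k : (if k == i then a else 0) * (if k == j then a else 0) = 0.
  by case: (eqVneq k i) => [->|]; rewrite ?mul0r // (negbTE ne) mulr0.
under eq_bigr do rewrite E. under [X in _ - X]eq_bigr do rewrite E.
by rewrite !big1 // subr0 oppr0.
Qed.

Lemma Cb_fd l : Cb l (fd d) = -1.
Proof.
rewrite /Cb mom_fd ffunE /= mulr0 sub0r.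
have E1 k : bin2z (evec k l) = 0 by rewrite evecE; case: (k == l).
have E2 k : bin2z (nvec k l) = if k == l then 1 else 0.
  by rewrite nvecE; case: (k == l); rewrite // /= binn.
under eq_bigr do rewrite E1; under [X in _ - X]eq_bigr do rewrite E2.
by rewrite sum_if big1 // oppr0 sub0r.
Qed.


Lemma m0_lmul (p q : L) : m0 (lmul p q) = m0 p * m0 q.
Proof.
rewrite /m0 mom_lmul big_distrlr; apply: eq_bigr => a _; apply: eq_bigr => b _.
by rewrite !mulr1.
Qed.

Lemma m1_lmul i (p q : L) : m1 i (lmul p q) = m1 i p * m0 q + m0 p * m1 i q.
Proof.
rewrite /m1 /m0 mom_lmul !big_distrlr -big_split; apply: eq_bigr => a _.
rewrite -big_split; apply: eq_bigr => b _ /=; rewrite ffunE; exact: alg2.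
Qed.

Lemma M2_lmul i j (p q : L) : M2 i j (lmul p q) =
  M2 i j p * m0 q + m1 i p * m1 j q + m1 j p * m1 i q + m0 p * M2 i j q.
Proof.
rewrite /M2 /m1 /m0 mom_lmul !big_distrlr -!big_split; apply: eq_bigr => a _.
rewrite -!big_split; apply: eq_bigr => b _ /=; rewrite !ffunE; exact: alg4.
Qed.

Lemma mom_scale phi (p : L) c : mom phi (lmul p [:: (c, mz d)]) = c * mom phi p.
Proof.
rewrite mom_lmul /mom big_distrr; apply: eq_bigr => a _.
rewrite big_cons big_nil addr0 /=.
have -> : madd a.2 (mz d) = a.2 by apply/ffunP => i; rewrite !ffunE addr0.
by rewrite mulrAC mulrC mulrA.
Qed.

Lemma sum_mom_gen (Y : Lq d) (f : M -> int) (p : L) :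
  \sum_(t <- p) (Y *~ f t.2) *~ t.1 = Y *~ mom f p.
Proof.
rewrite /mom mulrz_sumr; apply: eq_bigr => t _.
by rewrite -mulrzA mulrC.
Qed.

Lemma sum_swap (I : Type) (r : seq I) (P : pred I) (F : I -> M -> Lq d) (p : L) :
  \sum_(t <- p) (\sum_(i <- r | P i) F i t.2) *~ t.1 =
  \sum_(i <- r | P i) \sum_(t <- p) (F i t.2) *~ t.1.
Proof.
under eq_bigr do rewrite mulrz_suml.
by rewrite exchange_big.
Qed.

Lemma zero_mom_J (p : L) : m0 p = 0 -> (forall i, m1 i p = 0) ->
  (forall i j : 'I_d, (j < i)%N -> M2 i j p = 0) -> (forall i, Cb i p = 0) ->
  inJ (\pi_(Lq d) p).
Proof.
move=> H0 H1 H2 H3.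
rewrite Pi_sum.
have -> : \sum_(t <- p) mon t.2 *~ t.1 =
    \sum_(t <- p) (Tk t.2) *~ t.1 + \sum_(t <- p) (Bk t.2) *~ t.1.
  by rewrite -big_split; apply: eq_bigr => t _ /=; rewrite -mulrzDl /Tk subrK.
have -> : \sum_(t <- p) (Bk t.2) *~ t.1 = 0.
  rewrite /Bk.
  under eq_bigr do rewrite !mulrzDl.
  rewrite !big_split /=.
  have -> : \sum_(t <- p) (1 : Lq d) *~ t.1 = 0.
    rewrite -mulrz_sumr.
    have -> : \sum_(t <- p) t.1 = m0 p.
      by rewrite /m0 /mom; apply: eq_bigr => t _; rewrite mulr1.
    by rewrite H0 mulr0z.
  have -> : \sum_(t <- p) (Lk t.2) *~ t.1 = 0.
    rewrite /Lk (sum_swap _ _ (fun (i : 'I_d) (k : M) => X i *~ k i)) big1 // => i _.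
    by rewrite (sum_mom_gen (X i) (fun k => k i)) -/(m1 i p) H1 mulr0z.
  rewrite /Q2 (sum_swap _ _ (fun (i : 'I_d) (k : M) => X i * X i *~ bin2z (k i))).
  rewrite (sum_swap _ _ (fun (i : 'I_d) (k : M) => \sum_(j < d | (j < i)%N) X i * X j *~ (k i * k j))).
  rewrite !add0r.
  rewrite big1 ?add0r; last first.
    move=> i _; rewrite (sum_mom_gen (X i * X i) (fun k => bin2z (k i))).
    by rewrite -/(Cb i p) H3 mulr0z.
  rewrite big1 // => i _.
  rewrite (sum_swap _ _ (fun (j : 'I_d) (k : M) => X i * X j *~ (k i * k j))) big1 // => j ji.
  by rewrite (sum_mom_gen (X i * X j) (fun k => k i * k j)) -/(M2 i j p) H2 // mulr0z.
rewrite addr0; apply: Jsum => t _; apply: Jz; exact: Tall.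
Qed.

End Moments.

Local Open Scope quotient_scope.

Section Final.
Variable d : nat.
Local Notation L := (laurent d).
Local Notation M := (mono d).

Lemma mom_flat phi (s : seq (L * L * L)) :
  mom phi (flatten [seq lmul (lmul x.1.1 x.1.2) x.2 | x <- s]) =
  \sum_(x <- s) mom phi (lmul (lmul x.1.1 x.1.2) x.2).
Proof. by rewrite /mom big_flatten big_map. Qed.

Lemma m0_inI (a : L) : inI a -> m0 a = 0.
Proof. by rewrite /inI eval1_mom. Qed.

Lemma Cb2 l (p : L) : Cb l p *+ 2 = M2 l l p - m1 l p.
Proof.
rewrite /Cb /M2 /m1 /mom -sumrMnl -sumrB; apply: eq_bigr => t _.
by rewrite -mulrnAr bin2z2 mulrBr.
Qed.

Lemma evE (a : Lq d) : ev a = eval1 (repr a).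
Proof. by rewrite /ev; unlock. Qed.

End Final.

Unset Implicit Arguments.

Theorem lemma2p5 (d : nat) (hd : (2 <= d)%N) (g : laurent d) :
  in_fI3 g <->
  [/\ \sum_(k <- lsupp g) coef g k = 0,
      (forall i : 'I_d, \sum_(k <- lsupp g) coef g k * k i = 0),
      (forall i j : 'I_d, i != j -> \sum_(k <- lsupp g) coef g k * (k i * k j) = 0)
    & (forall i j : 'I_d, i != j ->
         \sum_(k <- lsupp g) coef g k * (k i ^+ 2 - k j ^+ 2) = 0)].
Proof.
have EA : \sum_(k <- lsupp g) coef g k = m0 g.
  by rewrite /m0 -mom_lsupp; apply: eq_bigr => k _; rewrite mulr1.
have EB i : \sum_(k <- lsupp g) coef g k * k i = m1 i g by exact: mom_lsupp.
have EC i j : \sum_(k <- lsupp g) coef g k * (k i * k j) = M2 i j g by exact: mom_lsupp.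
have ED i j : \sum_(k <- lsupp g) coef g k * (k i ^+ 2 - k j ^+ 2) = M2 i i g - M2 j j g.
  rewrite /M2 -!mom_lsupp -sumrB; apply: eq_bigr => k _.
  by rewrite mulrBr !expr2.
split.
- case=> h [r [[s [Hs Hr]] Hg]].
  have Hmom phi : mom phi g = mom phi (lmul (fd d) h) +
      \sum_(x <- s) mom phi (lmul (lmul x.1.1 x.1.2) x.2).
    by rewrite (mom_equiv phi Hg) /ladd mom_cat (mom_equiv phi Hr) mom_flat.
  have Z0 : \sum_(x <- s) m0 (lmul (lmul x.1.1 x.1.2) x.2) = 0.
    rewrite big_seq big1 // => x /Hs [ha hb hc].
    by rewrite !m0_lmul (m0_inI ha) mul0r mul0r.
  have Z1 i : \sum_(x <- s) m1 i (lmul (lmul x.1.1 x.1.2) x.2) = 0.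
    rewrite big_seq big1 // => x /Hs [ha hb hc].
    by rewrite m1_lmul !m0_lmul m1_lmul (m0_inI ha) (m0_inI hb) (m0_inI hc) !mul0r !mulr0 !addr0.
  have Z2 i j : \sum_(x <- s) M2 i j (lmul (lmul x.1.1 x.1.2) x.2) = 0.
    rewrite big_seq big1 // => x /Hs [ha hb hc].
    rewrite M2_lmul !m1_lmul !m0_lmul (m0_inI ha) (m0_inI hb) (m0_inI hc).
    by rewrite !mul0r !mulr0 !addr0 !mul0r !add0r.
  have G0 : m0 g = 0 by rewrite /m0 Hmom -/(m0 _) Z0 m0_lmul m0_fd mul0r addr0.
  have G1 i : m1 i g = 0.
    by rewrite /m1 Hmom -/(m1 i _) Z1 m1_lmul m0_fd m1_fd mul0r mul0r addr0 addr0.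
  have G2 i j : M2 i j g = (if i == j then -2 else 0) * m0 h.
    rewrite /M2 Hmom -/(M2 i j _) Z2 M2_lmul !m1_fd m0_fd M2_fd.
    by rewrite !mul0r !addr0.
  split.
  + by rewrite EA.
  + by move=> i; rewrite EB.
  + by move=> i j ne; rewrite EC G2 (negbTE ne) mul0r.
  + by move=> i j ne; rewrite ED !G2 !eqxx subrr.
- case=> HA HB HC HD.
  have G0 : m0 g = 0 by rewrite -EA.
  have G1 i : m1 i g = 0 by rewrite -EB.
  have G2 i j : i != j -> M2 i j g = 0 by move=> ne; rewrite -EC HC.
  have G3 i j : M2 i i g = M2 j j g.
    case: (eqVneq i j) => [->|ne] //; apply/eqP; rewrite -subr_eq0 -ED HD //.
  have d0 : (0 < d)%N by apply: leq_trans hd.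
  pose i0 : 'I_d := Ordinal d0.
  pose c := - Cb i0 g.
  pose h : laurent d := [:: (c, mz d)].
  pose q := lmul (fd d) h.
  pose p := g ++ lneg q.
  have Hp phi : mom phi p = mom phi g - c * mom phi (fd d).
    by rewrite /p mom_cat mom_neg /q /h mom_scale.
  have Cbg l : Cb l g = Cb i0 g.
    apply/eqP; rewrite -subr_eq0; apply/eqP.
    have : (Cb l g - Cb i0 g) *+ 2 = 0 by rewrite mulrnBl !Cb2 !G1 !subr0 (G3 l i0) subrr.
    by move/eqP; rewrite mulrn_eq0 => /= /eqP.
  have J : inJ (\pi_(Lq d) p).
    apply: zero_mom_J.
    - by rewrite /m0 Hp -/(m0 g) -/(m0 (fd d)) G0 m0_fd mulr0 subrr.
    - by move=> i; rewrite /m1 Hp -/(m1 i g) -/(m1 i (fd d)) G1 m1_fd mulr0 subrr.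
    - move=> i j ji; rewrite /M2 Hp -/(M2 i j g) -/(M2 i j (fd d)) G2; last first.
        by apply/eqP => E; rewrite E ltnn in ji.
      rewrite M2_fd; case: (eqVneq i j) => [E|_]; first by rewrite E ltnn in ji.
      by rewrite mulr0 subrr.
    - move=> l; rewrite /Cb Hp -/(Cb l g) -/(Cb l (fd d)) Cb_fd Cbg /c.
      by rewrite mulrN1 opprK addrN.
  case: J => s [Hs Hsum].
  pose s' := [seq (repr x.1.1, repr x.1.2, repr x.2) | x <- s].
  pose r := flatten [seq lmul (lmul x.1.1 x.1.2) x.2 | x <- s'].
  exists h, r; split.
    exists s'; split => // x /mapP [y /Hs /and3P [h1 h2 h3] ->] /=.
    by rewrite /inI -!evE (eqP h1) (eqP h2) (eqP h3).
  apply/eqL; rewrite /ladd PiD.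
  have -> : \pi_(Lq d) r = \pi_(Lq d) p.
    rewrite Hsum /r Pi_flatten big_map /s' big_map; apply: eq_bigr => x _ /=.
    by rewrite !PiM !reprK.
  by rewrite /p PiD PiN addrC subrK.
Qed.
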